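(* Let $z=z(k,\varepsilon)$ and choose $\eta$ with $\Re(\overline z\eta)\ge0$. Then there is a constant $\rho>0$ independent of $k$ and $\varepsilon$ such that for all $k>0$ and all $v\in H^1(\Omega)$, $$\vert a_\varepsilon(v,v)\vert\ \ge\ \Im\big(\Theta\,a_\varepsilon(v,v)\big)\ \ge\ \rho\,\frac{\vert\varepsilon\vert}{k^2}\Vert v\Vert_{1,k}^2,\qquad\text{where }\Theta=-\overline z/\vert z\vert.$$
   Context: $\Omega\subset\mathbb R^d$ ($d=2,3$) a bounded Lipschitz domain with boundary $\Gamma$. $k>0$, $\varepsilon\in\mathbb R\setminus\{0\}$ with $\vert\varepsilon\vert\le C_0k^2$ for a fixed constant $C_0$, $\eta\in\mathbb C$. $z=\sqrt{k^2+{\rm i}\varepsilon}$ with the branch cut of the square root on the positive real axis (so $\Im z>0$). $a_\varepsilon(u,v)=\int_\Omega\nabla u\cdot\nabla\overline v-(k^2+{\rm i}\varepsilon)\int_\Omega u\overline v-{\rm i}\eta\int_\Gamma u\overline v$; $\Vert v\Vert_{1,k}^2=\Vert\nabla v\Vert_{L^2(\Omega)}^2+k^2\Vert v\Vert_{L^2(\Omega)}^2$. *)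

(* Defs.v *)
From HB Require Import structures.
From mathcomp Require Import all_boot all_order all_algebra.
From mathcomp Require Import complex.
Set Implicit Arguments. Unset Strict Implicit. Unset Printing Implicit Defensive.
Import Order.TTheory GRing.Theory Num.Theory.
Local Open Scope ring_scope.
Local Open Scope complex_scope.

(* Abstract model of the quantities entering a_eps(v,v) for v in H^1(Omega):
     G = ||grad v||^2_{L^2(Omega)},  L = ||v||^2_{L^2(Omega)},
     B = ||v||^2_{L^2(Gamma)} (trace).
   For v = u the sesquilinear form a_eps literally unfolds to
     a_eps(v,v) = G - (k^2 + i eps) L - i eta B. *)
Definition a_eps_diag (R : rcfType) (k eps : R) (eta : R[i]) (G L B : R) : R[i] :=
  G%:C - ((k ^+ 2)%:C + 'i * eps%:C) * L%:C - 'i * eta * B%:C.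

Definition norm1k2 (R : rcfType) (k G L : R) : R := G + k ^+ 2 * L.

Definition Theta (R : rcfType) (z : R[i]) : R[i] :=
  - (z^*) / (Normc.normc z)%:C.

(* Main.v *)
Require Import Defs.
From HB Require Import structures.
From mathcomp Require Import all_boot all_order all_algebra.
From mathcomp Require Import complex ring lra.
Import Order.TTheory GRing.Theory Num.Theory.
Local Open Scope ring_scope.
Local Open Scope complex_scope.

Theorem lemma2p4 (R : rcfType) (C0 : R) (hC0 : 0 < C0)
  (H1 : Type) (gradn2 l2n2 trn2 : H1 -> R)
  (hgrad : forall v, 0 <= gradn2 v) (hl2 : forall v, 0 <= l2n2 v)
  (htr : forall v, 0 <= trn2 v) :
  exists rho : R, 0 < rho /\
    forall (k eps : R) (eta z : R[i]),
      0 < k -> eps != 0 -> `|eps| <= C0 * k ^+ 2 ->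
      z ^+ 2 = (k ^+ 2)%:C + 'i * eps%:C -> (0 < complex.Im z)%R ->
      (0 <= complex.Re (z^* * eta))%R ->
      forall v : H1,
        let a := a_eps_diag k eps eta (gradn2 v) (l2n2 v) (trn2 v) in
        (complex.Im (Theta z * a) <= Normc.normc a)%R /\
        (rho * (`|eps| / k ^+ 2) * norm1k2 k (gradn2 v) (l2n2 v)
          <= complex.Im (Theta z * a))%R.
Proof.
exists (1 / (2 * (1 + C0))); split.
  by apply: divr_gt0 => //; lra.
move=> k eps [e1 e2] [x y] hk heps hle h hy hr v a.
have h1 := congr1 (@complex.Re _) h.
have h2 := congr1 (@complex.Im _) h.
rewrite /= in h1 h2 hy hr.
have {h1} h1 : x ^+ 2 - y ^+ 2 = k ^+ 2 by rewrite !expr2; lra.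
have {h2} h2 : eps = 2 * x * y by lra.
move: (gradn2 v) (l2n2 v) (trn2 v) (hgrad v) (hl2 v) (htr v) @a => G L B hG hL hB a.
set p := G - k ^+ 2 * L + e2 * B.
set q := - (eps * L) - e1 * B.
have hn0 : 0 <= x ^+ 2 + y ^+ 2 by rewrite !expr2; nra.
have hnp : 0 < x ^+ 2 + y ^+ 2 by rewrite !expr2; nra.
set n := Num.Def.sqrtr (x ^+ 2 + y ^+ 2).
have hn2 : n ^+ 2 = x ^+ 2 + y ^+ 2 by rewrite sqr_sqrtr.
have hn : 0 < n by rewrite sqrtr_gt0.
have hnz : n != 0 by rewrite gt_eqF.
have EI : complex.Im (Theta (x +i* y) * a) = (y * p - x * q) / n.
  rewrite /a /a_eps_diag /Theta /= -/n /p /q.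
  rewrite -[n ^+ 2 + 0 ^+ 2]/(n ^+ 2 + 0 ^+ 2) expr0n /= addr0.
  field; done.
have EN : Normc.normc a = Num.Def.sqrtr (p ^+ 2 + q ^+ 2).
  rewrite /a /a_eps_diag /= /p /q; congr (Num.Def.sqrtr _); congr (_ ^+ 2 + _ ^+ 2); ring.
rewrite EI EN; split.
  set m := Num.Def.sqrtr (p ^+ 2 + q ^+ 2).
  have hm0 : 0 <= p ^+ 2 + q ^+ 2 by rewrite !expr2; nra.
  have hm2 : m ^+ 2 = p ^+ 2 + q ^+ 2 by rewrite sqr_sqrtr.
  have hm : 0 <= m by rewrite sqrtr_ge0.
  rewrite ler_pdivrMr //.
  have id : (y * p - x * q) ^+ 2 + (x * p + y * q) ^+ 2 = (m * n) ^+ 2.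
    by rewrite exprMn hm2 hn2; ring.
  have hmn : 0 <= m * n by apply: mulr_ge0 => //; apply: ltW.
  move: id hmn; set t := y * p - x * q; set s := x * p + y * q; set u := m * n.
  rewrite !expr2 => id hmn.
  have hs : 0 <= s * s by nra.
  rewrite ?(mulrC n m) -/u; nra.
have hax : `|x| ^+ 2 = x ^+ 2 by rewrite real_normK // num_real.
have hax0 : 0 <= `|x| by [].
have heps' : `|eps| = 2 * `|x| * y.
  by rewrite h2 !normrM gtr0_norm ?(gtr0_norm hy) //.
have hk2 : 0 < k ^+ 2 by rewrite exprn_gt0.
have hxn : `|x| <= n.
  have : `|x| ^+ 2 <= n ^+ 2 by rewrite hax hn2 !expr2; nra.
  by rewrite !expr2 => H; nra.
have hn4 : n ^+ 2 <= (1 + C0) * k ^+ 2.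
  have e4 : (n ^+ 2) ^+ 2 = (k ^+ 2) ^+ 2 + eps ^+ 2.
    by rewrite hn2 -h1 h2; ring.
  have he2 : eps ^+ 2 <= (C0 * k ^+ 2) ^+ 2.
    rewrite -(real_normK (num_real eps)) !expr2; have := normr_ge0 eps; nra.
  have hn20 : 0 <= n ^+ 2 by rewrite exprn_ge0 // ltW.
  move: e4 he2 hn20 hk2; set N := n ^+ 2; set K := k ^+ 2; rewrite !expr2 => e4 he2 hn20 hk2'.
  rewrite leNgt; apply/negP => hc.
  have h3 : ((1 + C0) * K) * ((1 + C0) * K) < N * N.
    have hpos : 0 <= (1 + C0) * K by apply: mulr_ge0; lra.
    nra.
  have h4 : K * K + C0 * K * (C0 * K) <= (1 + C0) * K * ((1 + C0) * K).
    have : 0 <= C0 * (K * K) by apply: mulr_ge0; nra.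
    nra.
  lra.
set w := y / n.
have hw : (y * p - x * q) / n = w * G + w * n ^+ 2 * L + (x * e1 + y * e2) * B / n.
  rewrite /w /p /q h2 -h1 hn2; field; done.
have hrB : 0 <= (x * e1 + y * e2) * B / n.
  apply: divr_ge0; last exact: ltW.
  apply: mulr_ge0 => //; lra.
have hcw : 1 / (2 * (1 + C0)) * (`|eps| / k ^+ 2) <= w.
  rewrite /w heps' ler_pdivlMr // .
  have -> : 1 / (2 * (1 + C0)) * (2 * `|x| * y / k ^+ 2) * n
     = (`|x| * n) * y / ((1 + C0) * k ^+ 2) by field; rewrite ?gt_eqF //; lra.
  rewrite ler_pdivrMr; last by apply: mulr_gt0 => //; lra.
  have : `|x| * n <= (1 + C0) * k ^+ 2.
    apply: le_trans hn4; rewrite expr2; apply: ler_pM => //; exact: ltW.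
  nra.
have hkn : k ^+ 2 <= n ^+ 2 by rewrite hn2 -h1; have := sqr_ge0 y; lra.
rewrite hw /norm1k2.
have hw0 : 0 <= w by apply: divr_ge0; apply: ltW.
set c := 1 / (2 * (1 + C0)) * (`|eps| / k ^+ 2) in hcw *.
have hc0 : 0 <= c.
  have hd : 0 <= 2 * (1 + C0) by apply: mulr_ge0 => //; apply: addr_ge0 => //; exact: ltW.
  rewrite /c; apply: mulr_ge0; apply: divr_ge0 => //; exact: ltW.
have t1 : c * (k ^+ 2 * L) <= w * n ^+ 2 * L.
  rewrite mulrA; apply: ler_wpM2r => //; apply: ler_pM => //; exact: ltW.
have t2 : c * G <= w * G by apply: ler_wpM2r.
rewrite mulrDr; apply: (le_trans (_ : _ <= w * G + w * n ^+ 2 * L)).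
  exact: lerD.
by rewrite lerDl.
Qed.
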